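(* Let $0<m\le L$, $\kappa=L/m$, and let $\rho\in(0,1)$ satisfy $T_s=1/(1-\rho)\ge(\sqrt\kappa+1)/2$. Let $c=\dfrac{\kappa-(1+\rho)/(1-\rho)}{\rho\,(\kappa+(1+\rho)/(1-\rho))}$. Then $c\in[-1,1]$, the two-step momentum algorithm with parameters $\alpha=(1+\rho)(1+c\rho)/L$, $\beta=c\rho^2$, $\gamma=0$ achieves convergence rate $\rho$ for all $f\in\mathcal{Q}_m^L$, and $$\hat J_{\max}:=\max_{\lambda\in[m,L]}\hat J(\lambda)=\hat J(m)=\hat J(L)=\frac{\sigma_w^2(\kappa+1)}{2(1-c\rho^2)(1+\rho)(1+c\rho)},$$ $$\hat J_{\min}:=\min_{\lambda\in[m,L]}\hat J(\lambda)=\hat J(\hat\lambda)=\frac{\sigma_w^2}{(1+c\rho^2)(1-c\rho^2)},\qquad \hat\lambda=(m+L)/2.$$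
   Context: $\mathcal{Q}_m^L$ is the class of quadratic functions $f(x)=\tfrac12x^TQx-q^Tx$ on $\mathbb{R}^n$ with $q\in\mathbb{R}^n$, $Q=Q^T\succ0$ whose largest eigenvalue is $L$ and smallest is $m$. The two-step momentum algorithm is $x^{t+2}=x^{t+1}+\beta(x^{t+1}-x^t)-\alpha\nabla f\big(x^{t+1}+\gamma(x^{t+1}-x^t)\big)+\sigma_w w^t$ ($w^t$ white noise with zero mean and identity covariance, $\sigma_w\ge0$), with state matrix $A=\begin{bmatrix}0&I\\-\beta I+\gamma\alpha Q&(1+\beta)I-(1+\gamma)\alpha Q\end{bmatrix}$ on $\psi^t=[(x^t-x^\star)^T,(x^{t+1}-x^\star)^T]^T$; rate $\rho$ is achieved for all $f\in\mathcal{Q}_m^L$ if the spectral radius of $A$ is at most $\rho$ for every such $f$. For $\lambda>0$ let $a(\lambda)=\beta-\gamma\alpha\lambda$, $b(\lambda)=(1+\gamma)\alpha\lambda-(1+\beta)$, $d=a+b+1$, $l=a-b+1$, $h=1-a$ (evaluated at $\lambda$), and $\hat J(\lambda)=\sigma_w^2(d(\lambda)+l(\lambda))/(2d(\lambda)h(\lambda)l(\lambda))$ (the contribution of Hessian eigenvalue $\lambda$ to the steady-state variance of $x^t-x^\star$). *)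

(* Defs.v *)
From mathcomp Require Import all_boot all_order all_algebra.
From mathcomp Require Import complex.
Set Implicit Arguments. Unset Strict Implicit. Unset Printing Implicit Defensive.
Import Order.TTheory GRing.Theory Num.Theory.
Local Open Scope ring_scope.

Section Defs.
Variable R : rcfType.

(* Q is a symmetric positive definite n x n matrix whose (real) eigenvalues
   lie in [m, L], with m and L themselves eigenvalues: the smallest eigenvalue
   is m and the largest is L.  f(x) = 1/2 x^T Q x - q^T x. *)
Definition in_QmL (m L : R) (n : nat) (Q : 'M[R]_n) (q : 'cV[R]_n) : Prop :=
  [/\ Q^T = Q,
      (forall v : 'cV[R]_n, v != 0 -> 0 < (v^T *m Q *m v) 0 0),
      (forall lam : R, eigenvalue Q lam -> m <= lam <= L),
      eigenvalue Q m & eigenvalue Q L].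

(* State matrix of the two-step momentum algorithm on
   psi^t = [x^t - x*; x^{t+1} - x*]. *)
Definition state_mx (alpha beta gamma : R) (n : nat) (Q : 'M[R]_n)
  : 'M[R]_(n + n) :=
  block_mx 0 1%:M
           ((- beta)%:M + (gamma * alpha) *: Q)
           ((1 + beta)%:M - ((1 + gamma) * alpha) *: Q).

Definition spec_rad_le (n : nat) (A : 'M[R]_n) (rho : R) : Prop :=
  forall z : R[i], eigenvalue (map_mx (real_complex R) A) z -> Normc.normc z <= rho.

Definition achieves_rate (alpha beta gamma rho m L : R) : Prop :=
  forall (n : nat) (Q : 'M[R]_n) (q : 'cV[R]_n),
    in_QmL m L Q q -> spec_rad_le (state_mx alpha beta gamma Q) rho.

Definition a_ (alpha beta gamma lam : R) := beta - gamma * alpha * lam.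
Definition b_ (alpha beta gamma lam : R) := (1 + gamma) * alpha * lam - (1 + beta).
Definition d_ alpha beta gamma lam :=
  a_ alpha beta gamma lam + b_ alpha beta gamma lam + 1.
Definition l_ alpha beta gamma lam :=
  a_ alpha beta gamma lam - b_ alpha beta gamma lam + 1.
Definition h_ alpha beta gamma lam := 1 - a_ alpha beta gamma lam.

Definition Jhat (sigma_w alpha beta gamma lam : R) : R :=
  sigma_w ^+ 2 * (d_ alpha beta gamma lam + l_ alpha beta gamma lam)
  / (2 * d_ alpha beta gamma lam * h_ alpha beta gamma lam
       * l_ alpha beta gamma lam).

End Defs.

(* Main.v *)
Require Import Defs.
From mathcomp Require Import all_boot all_order all_algebra.
From mathcomp Require Import complex.
From mathcomp Require Import ring lra.
Import Order.TTheory GRing.Theory Num.Theory.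
Local Open Scope ring_scope.

Section Aux.
Variable R : rcfType.

Lemma Re_sum n (F : 'I_n -> R[i]) : complex.Re (\sum_i F i) = \sum_i complex.Re (F i).
Proof.
elim/big_rec2: _ => // i a x _ <-.
by case: (F i) => ? ?; case: x => ? ?.
Qed.

Lemma Im_sum n (F : 'I_n -> R[i]) : complex.Im (\sum_i F i) = \sum_i complex.Im (F i).
Proof.
elim/big_rec2: _ => // i a x _ <-.
by case: (F i) => ? ?; case: x => ? ?.
Qed.

Lemma norm2_gt0 n (v : 'rV[R]_n) : v != 0 -> 0 < (v *m v^T) 0 0.
Proof.
move=> nz.
have nn : forall k : 'I_n, true -> 0 <= v 0 k * v^T k 0.
  by move=> k _; rewrite mxE -expr2 sqr_ge0.
rewrite mxE lt_def; apply/andP; split; last by apply: sumr_ge0.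
apply: contra nz => /eqP H; apply/eqP/matrixP => i j; rewrite (ord1 i) !mxE.
have := psumr_eq0P nn H (i := j) isT.
rewrite mxE -expr2 => /eqP; rewrite expf_eq0 /= => /eqP //.
Qed.

Lemma sym_eig n (Q : 'M[R]_n) (y : 'rV[R[i]]_n) (mu : R[i]) :
  Q^T = Q -> y != 0 -> y *m map_mx (real_complex R) Q = mu *: y ->
  complex.Im mu = 0 /\ eigenvalue Q (complex.Re mu).
Proof.
move=> sQ nz; case: mu => p q E /=.
set y1 := map_mx (@complex.Re R) y; set y2 := map_mx (@complex.Im R) y.
have E1 : y1 *m Q = p *: y1 - q *: y2.
  apply/matrixP => i j; have /matrixP /(_ i j) := E.
  rewrite !mxE => /(congr1 (@complex.Re R)); rewrite Re_sum => H.
  have -> : p * complex.Re (y i j) - q * complex.Im (y i j) = complex.Re ((p +i* q)%C * y i j).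
    by case: (y i j) => a b.
  rewrite -H; apply: eq_bigr => k _; rewrite !mxE.
  by case: (y i k) => a b /=; rewrite mulr0 subr0.
have E2 : y2 *m Q = q *: y1 + p *: y2.
  apply/matrixP => i j; have /matrixP /(_ i j) := E.
  rewrite !mxE => /(congr1 (@complex.Im R)); rewrite Im_sum => H.
  have -> : q * complex.Re (y i j) + p * complex.Im (y i j) = complex.Im ((p +i* q)%C * y i j).
    by case: (y i j) => a b /=; rewrite addrC.
  rewrite -H; apply: eq_bigr => k _; rewrite !mxE.
  by case: (y i k) => a b /=; rewrite mulr0 add0r.
have tr1 : forall (A : 'M[R]_(1,1)), A 0 0 = A^T 0 0 by move=> A; rewrite mxE.
have S1 : (y1 *m Q *m y2^T) 0 0 = p * (y1 *m y2^T) 0 0 - q * (y2 *m y2^T) 0 0.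
  by rewrite E1 mulmxBl -!scalemxAl !mxE.
have S2 : (y2 *m Q *m y1^T) 0 0 = q * (y1 *m y1^T) 0 0 + p * (y2 *m y1^T) 0 0.
  by rewrite E2 mulmxDl -!scalemxAl !mxE.
have S3 : (y1 *m Q *m y2^T) 0 0 = (y2 *m Q *m y1^T) 0 0.
  by rewrite tr1 !trmx_mul trmxK sQ mulmxA.
have S4 : (y1 *m y2^T) 0 0 = (y2 *m y1^T) 0 0.
  by rewrite tr1 !trmx_mul trmxK.
have nz12 : (y1 != 0) || (y2 != 0).
  apply: contraR nz; rewrite negb_or !negbK => /andP[/eqP h1 /eqP h2].
  apply/eqP/matrixP => i j; have /matrixP/(_ i j) := h1.
  have /matrixP/(_ i j) := h2; rewrite !mxE /=.
  by case: (y i j) => a b /= -> ->.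
have pos : 0 < (y1 *m y1^T) 0 0 + (y2 *m y2^T) 0 0.
  have g1 := @norm2_gt0 n y1; have g2 := @norm2_gt0 n y2.
  have n1 : 0 <= (y1 *m y1^T) 0 0.
    have [->|/g1/ltW//] := eqVneq y1 0; by rewrite mul0mx mxE.
  have n2 : 0 <= (y2 *m y2^T) 0 0.
    have [->|/g2/ltW//] := eqVneq y2 0; by rewrite mul0mx mxE.
  by case/orP: nz12 => [/g1|/g2] h; lra.
have q0 : q = 0.
  have : q * ((y1 *m y1^T) 0 0 + (y2 *m y2^T) 0 0) = 0.
    rewrite mulrDr; move: S3; rewrite S1 S2 S4 => S3.
    rewrite -mulrDr.
    have E0 : forall a n1 n2 : R, q * (n1 + n2) = (q * n1 + p * a) - (p * a - q * n2) by move=> *; ring.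
    rewrite (E0 ((y2 *m y1^T) 0 0)).
    by rewrite S3 subrr.
  by move/eqP; rewrite mulf_eq0 (gt_eqF pos) orbF => /eqP.
split => //; apply/eigenvalueP.
case/orP: nz12 => h.
  by exists y1 => //; rewrite E1 q0 scale0r subr0.
by exists y2 => //; rewrite E2 q0 scale0r add0r.
Qed.
End Aux.

Lemma root_bound (R : rcfType) (rho c b : R) (z : R[i]) : 0 < rho -> -1 <= c -> c <= 1 ->
  - (rho * (1 + c)) <= b -> b <= rho * (1 + c) ->
  z * z + (b%:C)%C * z + ((c * rho ^+ 2)%:C)%C = 0 -> Normc.normc z <= rho.
Proof.
move=> r0 c1 c2 b1 b2; case: z => x y E.
have ERe := congr1 (@complex.Re R) E; have EIm := congr1 (@complex.Im R) E.
simpl in ERe, EIm.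
rewrite /Normc.normc -[X in _ <= X](ger0_norm (ltW r0)) -sqrtr_sqr ler_sqrt ?sqr_ge0 //.
have hrc1 : 0 <= rho * (1 - c) by apply: mulr_ge0; lra.
have hrc2 : 0 <= rho * (1 + c) by apply: mulr_ge0; lra.
have [y0|yn] := eqVneq y 0.
  subst y.
  have hx1 : x <= rho.
    rewrite leNgt; apply/negP => hx.
    have h1 : 0 < (x - rho) * (x + rho + b) by apply: mulr_gt0; lra.
    have h2 : 0 <= rho * (rho * (1 + c) + b) by apply: mulr_ge0; lra.
    nra.
  have hx2 : - rho <= x.
    rewrite leNgt; apply/negP => hx.
    have h1 : 0 < (- rho - x) * (rho - x - b) by apply: mulr_gt0; lra.
    have h2 : 0 <= rho * (rho * (1 + c) - b) by apply: mulr_ge0; lra.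
    nra.
  nra.
have hb : 2 * x + b = 0.
  have : y * (2 * x + b) = 0 by rewrite -EIm; ring.
  by move/eqP; rewrite mulf_eq0 (negbTE yn) /= => /eqP.
have -> : x ^+ 2 + y ^+ 2 = c * rho ^+ 2.
  have hb' : b = - (2 * x) by lra.
  rewrite hb' in ERe; nra.
nra.
Qed.

Lemma state_eig (R : rcfType) n (Q : 'M[R]_n) (al be : R) (z : R[i]) :
  al != 0 -> 
  eigenvalue (map_mx (real_complex R) (state_mx al be 0 Q)) z ->
  z = 0 \/ exists2 mu : R[i], z * z + (real_complex R al * mu - real_complex R (1 + be)) * z + real_complex R be = 0
       & exists2 y : 'rV_n, y != 0 & y *m map_mx (real_complex R) Q = mu *: y.
Proof.
move=> a0 /eigenvalueP [v Ev nz].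
rewrite /state_mx map_block_mx -(hsubmxK v) mul_row_block scale_row_mx in Ev.
case/eq_row_mx: Ev => E1 E2.
move: nz; rewrite -(hsubmxK v).
move: (lsubmx v) (rsubmx v) E1 E2 => x y E1 E2 nz.
rewrite map_mx0 mulmx0 add0r mul0r scale0r addr0 map_scalar_mx mul_mx_scalar in E1.
rewrite map_mx1 mulmx1 addr0 mul1r map_mxB map_scalar_mx map_mxZ mulmxBr mul_mx_scalar -scalemxAr in E2.
have [->|zn] := eqVneq z 0; [by left | right].
set toC := real_complex R in E1 E2 *.
have [w wE] : exists w, y *m map_mx toC Q = w by eexists.
rewrite wE in E2.
have y0 : y != 0.
  apply: contraNneq nz => y0; move: E1; rewrite y0 scaler0 => /eqP.
  by rewrite eq_sym scaler_eq0 (negbTE zn) /= => /eqP ->; rewrite row_mx0.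
have an : toC al != 0 by rewrite fmorph_eq0.
have zan : z * toC al != 0 by rewrite mulf_neq0.
set nb := toC (- be) in E1.
set c1 := toC (1 + be) in E2 *.
set mu := (z * c1 + nb - z * z) / (z * toC al).
exists mu; last first.
  exists y => //; rewrite wE; apply/matrixP => i j.
  have /matrixP/(_ i j) := E1; have /matrixP/(_ i j) := E2; rewrite !mxE => e2 e1.
  have key : z * toC al * w i j - (z * c1 + nb - z * z) * y i j
      = - (z * (x i j + (c1 * y i j - toC al * w i j) - z * y i j)) - (nb * y i j - z * x i j) by ring.
  rewrite e2 e1 !subrr mulr0 oppr0 addr0 in key.
  move/eqP: key; rewrite subr_eq0 => /eqP key.
  by apply: (mulfI zan); rewrite key /mu; field; rewrite zn an.
have -> : toC be = - nb by rewrite /nb /toC rmorphN opprK.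
by rewrite /mu; field; rewrite zn an.
Qed.

Ltac side := repeat (apply/andP; split); apply/negP => /eqP ?; nra.

Lemma div_mono (R : realFieldType) (K P1 P2 : R) :
  0 <= K -> 0 < P1 -> P1 <= P2 -> K / P2 <= K / P1.
Proof.
move=> K0 p1 p12.
have h : P2^-1 <= P1^-1 by rewrite lef_pV2 ?posrE // (lt_le_trans p1 p12).
exact: (ler_wpM2l K0 h).
Qed.


Theorem lemma4 (R : rcfType) (m L rho sigma_w : R) :
  0 < m -> m <= L -> 0 < rho -> rho < 1 -> 0 <= sigma_w ->
  (Num.sqrt (L / m) + 1) / 2 <= 1 / (1 - rho) ->
  let kappa := L / m in
  let c := (kappa - (1 + rho) / (1 - rho))
             / (rho * (kappa + (1 + rho) / (1 - rho))) in
  let alpha := (1 + rho) * (1 + c * rho) / L in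
  let beta := c * rho ^+ 2 in
  let gamma := 0 in
  let J := Jhat sigma_w alpha beta gamma in
  let lamhat := (m + L) / 2 in
  [/\ -1 <= c <= 1,
      achieves_rate alpha beta gamma rho m L,
      [/\ (forall lam, m <= lam <= L -> J lam <= J m),
      J m = J L &
      J m = sigma_w ^+ 2 * (kappa + 1)
              / (2 * (1 - c * rho ^+ 2) * (1 + rho) * (1 + c * rho))] &
      (forall lam, m <= lam <= L -> J lamhat <= J lam) /\ J lamhat = sigma_w ^+ 2 / ((1 + c * rho ^+ 2) * (1 - c * rho ^+ 2))].
Proof.
move=> m0 mL r0 r1 sw0 hsq kappa c alpha beta gamma J lamhat.
have L0 : 0 < L by apply: lt_le_trans mL.
have p1 : 0 < L * (1 - rho) by apply: mulr_gt0; lra.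
have p2 : 0 < (1 + rho) * m by apply: mulr_gt0; lra.
have p3 : 0 < rho * (L * (1 - rho) + (1 + rho) * m) by apply: mulr_gt0; lra.
have Hc : c * rho * (L * (1 - rho) + (1 + rho) * m) = L * (1 - rho) - (1 + rho) * m.
  by rewrite /c /kappa; field; side.
have Hsq : L * (1 - rho) ^+ 2 <= m * (1 + rho) ^+ 2.
  have k0 : 0 <= kappa by rewrite /kappa divr_ge0 // ltW.
  move: hsq; rewrite -/kappa; set sk := Num.sqrt kappa => hsq.
  have sk0 : 0 <= sk := sqrtr_ge0 kappa.
  have sk2 : sk ^+ 2 = kappa := sqr_sqrtr k0.
  have h0 : 0 <= 2 * (1 - rho) by lra.
  have := ler_wpM2r h0 hsq.
  have -> : (sk + 1) / 2 * (2 * (1 - rho)) = (sk + 1) * (1 - rho) by field.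
  have -> : 1 / (1 - rho) * (2 * (1 - rho)) = 2 by field; side.
  move=> h1.
  have h2 : 0 <= sk * (1 - rho) by apply: mulr_ge0; lra.
  have h3 : (sk * (1 - rho)) ^+ 2 <= (1 + rho) ^+ 2 by nra.
  have Lk : L = kappa * m by rewrite /kappa divfK // gt_eqF.
  rewrite exprMn sk2 in h3.
  rewrite Lk; nra.
have c1 : c <= 1.
  rewrite leNgt; apply/negP => h.
  have : 0 < (c - 1) * (rho * (L * (1 - rho) + (1 + rho) * m)) by apply: mulr_gt0; lra.
  nra.
have c2 : -1 <= c.
  rewrite leNgt; apply/negP => h.
  have : 0 < (- 1 - c) * (rho * (L * (1 - rho) + (1 + rho) * m)) by apply: mulr_gt0; lra.
  have : 0 <= (L - m) * (1 - rho ^+ 2) by apply: mulr_ge0; nra.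
  nra.
have cr : 0 < 1 + c * rho by nra.
set A := (1 + rho) * (1 + c * rho).
have A0 : 0 < A by apply: mulr_gt0; lra.
have aL : alpha * L = A by rewrite /alpha /A; field; side.
have am : alpha * m = 2 * (1 + beta) - A.
  by rewrite /alpha /beta /A /c /kappa; field; side.
have al0 : 0 < alpha by rewrite /alpha divr_gt0.
have AB : A - (1 + beta) = rho * (1 + c) by rewrite /A /beta; ring.
have b1 : 0 < 1 - beta by rewrite /beta; nra.
have b2 : 0 < 1 + beta by rewrite /beta; nra.
have sumab : alpha * m + alpha * L = 2 * (1 + beta) by rewrite am aL; ring.
have Pp : forall lam, m <= lam <= L -> 0 < alpha * lam /\ 0 < 2 * (1 + beta) - alpha * lam.
  move=> lam /andP[h1 h2]; have := ler_wpM2l (ltW al0) h1; have := ler_wpM2l (ltW al0) h2.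
  nra.
have Jf : forall lam, m <= lam <= L -> J lam =
    sigma_w ^+ 2 * (1 + beta) / ((1 - beta) * (alpha * lam * (2 * (1 + beta) - alpha * lam))).
  move=> lam /Pp [h1 h2].
  rewrite /J /Jhat /d_ /l_ /h_ /a_ /b_ /gamma; field; side.
have mm : m <= m <= L by rewrite lexx mL.
have LL : m <= L <= L by rewrite lexx mL.
have K0 : 0 <= sigma_w ^+ 2 * (1 + beta) by apply: mulr_ge0; [exact: sqr_ge0 | lra].
have hlh : alpha * lamhat = 1 + beta.
  have -> : alpha * lamhat = (alpha * m + alpha * L) / 2 by rewrite /lamhat; ring.
  by rewrite sumab; field.
have lhin : m <= lamhat <= L by rewrite /lamhat; apply/andP; split; lra.
split.
- by rewrite c2 c1.
- move=> n Q q [sQ _ Heig _ _] z.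
  have an : alpha != 0 by rewrite gt_eqF.
  move/(@state_eig R n Q alpha beta z an) => [->|[mu Ez [y yn Ey]]].
    by rewrite Normc.normc0 ltW.
  have [Im0 Hev] := @sym_eig R n Q y mu sQ yn Ey.
  have /andP[lm lL] := Heig _ Hev.
  move: Ez Im0 lm lL; case: mu {Ey Hev} => lam qq Ez /= q0 lm lL; subst qq.
  apply: (@root_bound R rho c (alpha * lam - 1 - beta) z r0 c2 c1).
  + have := ler_wpM2l (ltW al0) lm; have := ler_wpM2l (ltW al0) lL; lra.
  + have := ler_wpM2l (ltW al0) lm; have := ler_wpM2l (ltW al0) lL; lra.
  rewrite -Ez; congr (_ + _ * _ + _).
  by apply/eqP; rewrite eq_complex /=; apply/andP; split; apply/eqP; ring.
- split.
  + move=> lam hl; rewrite !Jf //; apply: div_mono => //.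
      by have [h1 h2] := Pp _ mm; apply: mulr_gt0 => //; apply: mulr_gt0.
    apply: ler_wpM2l; first lra.
    case/andP: hl => h1 h2; have := ler_wpM2l (ltW al0) h1; have := ler_wpM2l (ltW al0) h2.
    nra.
  + rewrite !Jf //; congr (_ / _); rewrite am aL; ring.
  + have K1 : A * (kappa + 1) = 2 * (1 + beta) * kappa.
      by rewrite -sumab -aL /kappa; field; side.
    have amk : alpha * m = A / kappa by rewrite -aL /kappa; field; side.
    rewrite Jf // -/beta -sumab amk aL.
    have -> : 2 * (1 - beta) * (1 + rho) * (1 + c * rho) = 2 * (1 - beta) * A by rewrite /A; ring.
    have -> : 1 + beta = A * (kappa + 1) / (2 * kappa).
      by rewrite K1; field; side.
    field; side.
- split.
  + move=> lam hl; rewrite !Jf // hlh; apply: div_mono => //.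
      by have [h1 h2] := Pp _ hl; apply: mulr_gt0 => //; apply: mulr_gt0.
    apply: ler_wpM2l; first lra.
    have := sqr_ge0 (alpha * lam - (1 + beta)); nra.
  + rewrite Jf // hlh -/beta; field; side.
Qed.
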